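(* Let $(Z,d)$ be a compact metric space which admits a homogeneous approximation graph. Then $Z$ has finite Assouad dimension.
   Context: A homogeneous approximation graph for $(Z,d)$ is given by a refining sequence $(\mathcal V_n)_{n\ge0}$ of finite open covers of $Z$ (so $\mathcal V_0=\{Z\}$, every element of $\mathcal V_{n+1}$ is contained in some element of $\mathcal V_n$, and $\max_{V\in\mathcal V_n}\operatorname{diam}V\to0$), together with constants $\lambda>1$, $0<\eta\le\theta$ and $C_\Gamma,N_\Gamma\in\mathbb N$ such that for every $n\in\mathbb N$: (1) $\max_{V\in\mathcal V_n}\operatorname{diam}(V)\le\lambda^{-n+1}\theta$; (2) $\operatorname{Leb}(\mathcal V_n)\ge\lambda^{-n+1}\eta$, where $\operatorname{Leb}(\mathcal U)=\min_{z\in Z}\max_{U\in\mathcal U}d(z,Z\setminus U)$; (3) each $v\in\mathcal V_n$ contains at most $C_\Gamma$ elements of $\mathcal V_{n+1}$, i.e. $\#\{w\in\mathcal V_{n+1}:w\subset v\}\le C_\Gamma$; (4) $\#\{w\in\mathcal V_n:w\cap v\ne\varnothing\}\le N_\Gamma$ for every $v\in\mathcal V_n$. The Assouad dimension is the infimum of $s\ge0$ for which there is $C$ with $\#Y\le C(b/a)^s$ whenever $0<a\le b$ and $Y\subset Z$ is finite with $a\le d(y,y')\le b$ for all distinct $y,y'\in Y$. *)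

(* Defs.v *)
From Stdlib Require Import Reals List.
Open Scope R_scope.

Section Metric.
Context {Z : Type} (d : Z -> Z -> R).

Definition is_metric : Prop :=
  (forall x y, 0 <= d x y) /\
  (forall x y, d x y = 0 <-> x = y) /\
  (forall x y, d x y = d y x) /\
  (forall x y z, d x z <= d x y + d y z).

Definition is_open (U : Z -> Prop) : Prop :=
  forall x, U x -> exists r, 0 < r /\ forall y, d x y < r -> U y.

Definition is_compact : Prop :=
  forall (I : Type) (U : I -> Z -> Prop),
    (forall i, is_open (U i)) ->
    (forall z, exists i, U i z) ->
    exists l : list I, forall z, exists i, In i l /\ U i z.

Definition finite_open_cover (V : list (Z -> Prop)) : Prop :=
  NoDup V /\ (forall U, In U V -> is_open U) /\
  (forall z, exists U, In U V /\ U z).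

Definition diam_le (U : Z -> Prop) (c : R) : Prop :=
  forall x y, U x -> U y -> d x y <= c.

(** Leb(V) >= c, where Leb(V) = min_z max_{U in V} d(z, Z \ U)
    and d(z, Z \ U) = inf_{y notin U} d(z,y) (= +oo if U = Z). *)
Definition leb_ge (V : list (Z -> Prop)) (c : R) : Prop :=
  forall z, exists U, In U V /\ forall y, ~ U y -> c <= d z y.

(** #{ w in W : P w } <= k *)
Definition card_le (W : list (Z -> Prop)) (P : (Z -> Prop) -> Prop) (k : nat) : Prop :=
  forall l : list (Z -> Prop), NoDup l -> (forall w, In w l -> In w W /\ P w) ->
    (length l <= k)%nat.

Definition subset (A B : Z -> Prop) : Prop := forall z, A z -> B z.
Definition meets (A B : Z -> Prop) : Prop := exists z, A z /\ B z.

Definition has_homogeneous_approximation_graph : Prop :=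
  exists (V : nat -> list (Z -> Prop)) (lam eta theta : R) (CG NG : nat),
    (forall n, finite_open_cover (V n)) /\
    V 0%nat = (fun _ : Z => True) :: nil /\
    (forall n w, In w (V (S n)) -> exists v, In v (V n) /\ subset w v) /\
    (forall eps, 0 < eps -> exists N, forall n, (N <= n)%nat ->
        forall v, In v (V n) -> diam_le v eps) /\
    1 < lam /\ 0 < eta /\ eta <= theta /\
    (forall n, (1 <= n)%nat ->
       (forall v, In v (V n) -> diam_le v (Rpower lam (- INR n + 1) * theta)) /\
       leb_ge (V n) (Rpower lam (- INR n + 1) * eta) /\
       (forall v, In v (V n) -> card_le (V (S n)) (fun w => subset w v) CG) /\
       (forall v, In v (V n) -> card_le (V n) (fun w => meets w v) NG)).

Definition assouad_admissible (s : R) : Prop :=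
  exists C : R, forall a b : R, 0 < a -> a <= b ->
    forall Y : list Z, NoDup Y ->
      (forall y y', In y Y -> In y' Y -> y <> y' -> a <= d y y' /\ d y y' <= b) ->
      INR (length Y) <= C * Rpower (b / a) s.

(** finite Assouad dimension: the infimum is over a nonempty set *)
Definition finite_assouad_dimension : Prop :=
  exists s, 0 <= s /\ assouad_admissible s.

End Metric.

(* Main.v *)
Require Import Defs.
From Stdlib Require Import Reals List.
From Stdlib Require Import Lia Lra ClassicalEpsilon Classical Wf_nat.
Open Scope R_scope.

Lemma fiber_count {A B : Type} (eqB : forall x y : B, {x = y} + {x <> y})
  (f : A -> B) (C : nat) :
  forall (img : list B) (l : list A), NoDup l ->
  (forall x, In x l -> In (f x) img) ->
  (forall b, In b img -> forall l', NoDup l' -> incl l' l ->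
      (forall x, In x l' -> f x = b) -> (length l' <= C)%nat) ->
  (length l <= C * length img)%nat.
Proof.
  induction img as [|b img IH]; intros l Hnd Hin Hfib.
  - destruct l as [|x l]; simpl; [lia|]. destruct (Hin x (or_introl eq_refl)).
  - set (p := fun x => if eqB (f x) b then true else false).
    rewrite <- (filter_length p l).
    assert (H1 : (length (filter p l) <= C)%nat).
    { apply (Hfib b (or_introl eq_refl)).
      - apply NoDup_filter; auto.
      - intros x Hx. apply filter_In in Hx; tauto.
      - intros x Hx. apply filter_In in Hx as [_ Hx]. unfold p in Hx.
        destruct (eqB (f x) b); [auto|discriminate]. }
    assert (H2 : (length (filter (fun x => negb (p x)) l) <= C * length img)%nat).
    { apply IH.
      - apply NoDup_filter; auto.
      - intros x Hx. apply filter_In in Hx as [Hx Hn].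
        destruct (Hin x Hx) as [E|E]; [|exact E].
        unfold p in Hn. destruct (eqB (f x) b); [discriminate| congruence].
      - intros b' Hb' l' Hnd' Hincl Hfb. apply (Hfib b' (or_intror Hb')); auto.
        intros x Hx. apply Hincl in Hx. apply filter_In in Hx; tauto. }
    simpl. lia.
Qed.

Lemma NoDup_map_inj {A B : Type} (f : A -> B) (l : list A) :
  NoDup l -> (forall x y, In x l -> In y l -> f x = f y -> x = y) -> NoDup (map f l).
Proof.
  induction 1 as [|x l Hx Hnd IH]; intros Hinj; simpl; constructor.
  - intro H. apply in_map_iff in H as [y [Hy Hyl]].
    assert (y = x) by (apply Hinj; simpl; auto). subst. contradiction.
  - apply IH. intros; apply Hinj; simpl; auto.
Qed.

Section Main.
Context {Z : Type} (d : Z -> Z -> R).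

Lemma level (V : nat -> list (Z -> Prop)) (CG : nat) (P : (Z -> Prop) -> Prop)
  (Hpar : forall n w, In w (V (S n)) -> exists v, In v (V n) /\ subset w v)
  (HC : forall n, (1 <= n)%nat -> forall v, In v (V n) ->
          card_le (V (S n)) (fun w => subset w v) CG)
  (HP : forall w v, subset w v -> P w -> P v) (m K : nat) (Hm : (1 <= m)%nat)
  (H0 : card_le (V m) P K) : forall k, card_le (V (m + k)%nat) P (K * CG ^ k).
Proof.
  induction k.
  - rewrite Nat.add_0_r. simpl. rewrite Nat.mul_1_r. exact H0.
  - intros l Hnd Hl. rewrite Nat.add_succ_r in Hl.
    set (f := fun w => epsilon (inhabits (fun _ : Z => True))
                (fun v => In v (V (m + k)%nat) /\ subset w v)).
    assert (Hf : forall w, In w l -> In (f w) (V (m + k)%nat) /\ subset w (f w)).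
    { intros w Hw. apply epsilon_spec. apply Hpar. apply Hl, Hw. }
    set (dec := fun x y : Z -> Prop => excluded_middle_informative (x = y)).
    set (img := nodup dec (map f l)).
    assert (Himg : (length img <= K * CG ^ k)%nat).
    { apply IHk. apply NoDup_nodup. intros v Hv. unfold img in Hv.
      apply nodup_In, in_map_iff in Hv. destruct Hv as [w [<- Hw]].
      destruct (Hf w Hw) as [H1 H2]. split; auto. apply (HP w); auto. apply Hl; auto. }
    apply Nat.le_trans with (CG * length img)%nat.
    + apply (fiber_count dec f CG img l); auto.
      * intros x Hx. unfold img. apply nodup_In, in_map, Hx.
      * intros b Hb l' Hnd' Hincl Hfb. unfold img in Hb.
        apply nodup_In, in_map_iff in Hb as [w [<- Hw]].
        apply (HC (m + k)%nat ltac:(lia) (f w) (proj1 (Hf w Hw))); auto.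
        intros w' Hw'. split.
        -- apply Hl, Hincl, Hw'.
        -- rewrite <- (Hfb w' Hw'). apply Hf, Hincl, Hw'.
    + rewrite Nat.pow_succ_r'. nia.
Qed.

Lemma points_to_sets (W : list (Z -> Prop)) (P : (Z -> Prop) -> Prop) (K : nat)
  (a c : R) (Y : list Z) :
  c < a -> (forall w, In w W -> diam_le d w c) ->
  (forall z, exists w, In w W /\ w z) -> NoDup Y ->
  (forall y y', In y Y -> In y' Y -> y <> y' -> a <= d y y') ->
  (forall y w, In y Y -> w y -> P w) -> card_le W P K -> (length Y <= K)%nat.
Proof.
  intros Hca Hdiam Hcov HY Hsep HPY Hcard.
  set (g := fun y => epsilon (inhabits (fun _ : Z => True)) (fun w => In w W /\ w y)).
  assert (Hg : forall y, In (g y) W /\ g y y) by (intro y; apply epsilon_spec, Hcov).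
  rewrite <- (length_map g). apply Hcard.
  - apply NoDup_map_inj; auto. intros x y Hx Hy E. apply NNPP. intro Hne.
    specialize (Hsep x y Hx Hy Hne).
    destruct (Hg x) as [Hx1 Hx2]. destruct (Hg y) as [Hy1 Hy2].
    rewrite E in Hx2. pose proof (Hdiam _ Hy1 x y Hx2 Hy2). lra.
  - intros w Hw. apply in_map_iff in Hw as [y [<- Hy]]. split; [apply Hg|].
    apply (HPY y); auto. apply Hg.
Qed.

End Main.

Lemma rp (lam : R) (n : nat) : 0 < lam -> Rpower lam (- INR n + 1) = lam / lam ^ n.
Proof.
  intro H. rewrite Rpower_plus, Rpower_Ropp, Rpower_pow, Rpower_1; auto.
  unfold Rdiv; ring.
Qed.

Lemma exists_pow (lam x : R) : 1 < lam -> exists n, x < lam ^ n.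
Proof.
  intro H. assert (Rabs lam > 1) by (rewrite Rabs_pos_eq; lra).
  destruct (Pow_x_infinity lam H0 (x + 1)) as [N HN]. exists N.
  specialize (HN N (le_n N)). rewrite Rabs_pos_eq in HN.
  - lra.
  - apply pow_le; lra.
Qed.

Lemma least_pow_lt (lam x : R) : 1 < lam ->
  exists n, x < lam ^ n /\ (n = 0%nat \/ lam ^ (pred n) <= x).
Proof.
  intro H.
  destruct (dec_inh_nat_subset_has_unique_least_element (fun n => x < lam ^ n))
    as [n [[Hn Hmin] _]].
  - intro n; apply classic.
  - apply exists_pow; auto.
  - exists n. split; auto. destruct n as [|n]; [auto|right]. simpl.
    apply Rnot_lt_le. intro Hc. specialize (Hmin n Hc). lia.
Qed.

Lemma least_pow_le (lam x : R) : 1 < lam ->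
  exists n, x <= lam ^ n /\ (n = 0%nat \/ lam ^ (pred n) < x).
Proof.
  intro H.
  destruct (dec_inh_nat_subset_has_unique_least_element (fun n => x <= lam ^ n))
    as [n [[Hn Hmin] _]].
  - intro n; apply classic.
  - destruct (exists_pow lam x H) as [n Hn]. exists n; lra.
  - exists n. split; auto. destruct n as [|n]; [auto|right]. simpl.
    apply Rnot_le_lt. intro Hc. specialize (Hmin n Hc). lia.
Qed.

Lemma ln_nonneg (x : R) : 1 <= x -> 0 <= ln x.
Proof.
  intro H. destruct (Rle_lt_or_eq_dec 1 x H) as [H1|H1].
  - rewrite <- ln_1. left. apply ln_increasing; lra.
  - subst. rewrite ln_1. lra.
Qed.

Theorem proposition3p2 (Z : Type) (d : Z -> Z -> R) :
  is_metric d -> is_compact d -> has_homogeneous_approximation_graph d ->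
  finite_assouad_dimension d.
Proof.
  intros [Hd0 [Hdeq [Hsym Htri]]] _
    [V [lam [eta [theta [CG [NG [Hcov [HV0 [Hpar [_ [Hlam [Heta [Het Hlev]]]]]]]]]]]]].
  set (s := ln (INR CG + 1) / ln lam).
  set (D := lam ^ 2 * theta / eta).
  set (K0 := (NG + length (V 1%nat))%nat).
  assert (Hlnl : 0 < ln lam) by (rewrite <- ln_1; apply ln_increasing; lra).
  assert (HCG : 0 <= INR CG) by apply pos_INR.
  assert (Hs : 0 <= s).
  { unfold s. unfold Rdiv. apply Rmult_le_pos.
    - apply ln_nonneg; lra.
    - left; apply Rinv_0_lt_compat; auto. }
  assert (HD : 1 <= D).
  { unfold D. apply (Rmult_le_reg_r eta); auto. unfold Rdiv.
    rewrite Rmult_assoc, Rinv_l, Rmult_1_r by lra.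
    assert (1 <= lam ^ 2) by (simpl; nra). nra. }
  exists s. split; auto.
  exists (INR K0 * Rpower D s). intros a b Ha Hab Y HY Hsep.
  assert (HK0 : 0 <= INR K0) by apply pos_INR.
  assert (HRD : 0 < Rpower D s) by (unfold Rpower; apply exp_pos).
  assert (HRb : 0 < Rpower (b / a) s) by (unfold Rpower; apply exp_pos).
  assert (Hba : 1 <= b / a).
  { apply (Rmult_le_reg_r a); auto. unfold Rdiv.
    rewrite Rmult_assoc, Rinv_l, Rmult_1_r by lra. lra. }
  destruct Y as [|y0 Y'] eqn:EY.
  { simpl. apply Rmult_le_pos; [apply Rmult_le_pos|]; lra. }
  rewrite <- EY in *.
  assert (Hdiam : forall n, (1 <= n)%nat -> forall v, In v (V n) ->
            diam_le d v (theta * lam / lam ^ n)).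
  { intros n Hn v Hv. pose proof (proj1 (Hlev n Hn) v Hv) as H.
    rewrite rp in H by lra. intros x y Hx Hy. specialize (H x y Hx Hy).
    unfold Rdiv in *. lra. }
  assert (Hkey : exists k, (length Y <= K0 * CG ^ k)%nat /\ lam ^ k <= D * (b / a)).
  { destruct (least_pow_lt lam (theta / a) Hlam) as [n [Hn1 Hn2]].
    assert (Hlamn : 0 < lam ^ n) by (apply pow_lt; lra).
    assert (Hta : theta < a * lam ^ n).
    { apply (Rmult_lt_compat_r a) in Hn1; auto. unfold Rdiv in Hn1.
      rewrite Rmult_assoc, Rinv_l, Rmult_1_r in Hn1 by lra. lra. }
    assert (Hn3 : lam ^ n <= 1 \/ a * lam ^ n <= lam * theta).
    { destruct Hn2 as [->|Hn2]; [left; simpl; lra|right].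
      destruct n as [|n]; [simpl in *; lra|]. simpl in Hn2 |- *.
      apply (Rmult_le_compat_r a) in Hn2; [|lra]. unfold Rdiv in Hn2.
      rewrite Rmult_assoc, Rinv_l, Rmult_1_r in Hn2 by lra. nra. }
    assert (Hdiamn : forall v, In v (V (S n)) -> diam_le d v (theta / lam ^ n)).
    { intros v Hv. pose proof (Hdiam (S n) ltac:(lia) v Hv) as H.
      intros x y Hx Hy. specialize (H x y Hx Hy). simpl in H.
      replace (theta * lam / (lam * lam ^ n)) with (theta / lam ^ n) in H; auto.
      field; lra. }
    assert (Hc : theta / lam ^ n < a).
    { apply (Rmult_lt_reg_r (lam ^ n)); auto. unfold Rdiv.
      rewrite Rmult_assoc, Rinv_l, Rmult_1_r by lra. lra. }
    assert (Hsep' : forall y y', In y Y -> In y' Y -> y <> y' -> a <= d y y')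
      by (intros; apply Hsep; auto).
    destruct (Rlt_le_dec b eta) as [Hbe|Hbe].
    - destruct (least_pow_le lam (eta / b) Hlam) as [j [Hj1 Hj2]].
      destruct Hj2 as [->|Hj2].
      { simpl in Hj1. apply (Rmult_le_compat_r b) in Hj1; [|lra]. unfold Rdiv in Hj1.
        rewrite Rmult_assoc, Rinv_l, Rmult_1_r in Hj1 by lra. lra. }
      destruct j as [|j]; [simpl in *; lra|]. simpl in Hj2.
      assert (Hlamj : 0 < lam ^ j) by (apply pow_lt; lra).
      assert (Hbj : b * lam ^ j < eta).
      { apply (Rmult_lt_compat_r b) in Hj2; [|lra]. unfold Rdiv in Hj2.
        rewrite Rmult_assoc, Rinv_l, Rmult_1_r in Hj2 by lra. lra. }
      assert (Hbj2 : eta <= b * (lam * lam ^ j)).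
      { simpl in Hj1. apply (Rmult_le_compat_r b) in Hj1; [|lra]. unfold Rdiv in Hj1.
        rewrite Rmult_assoc, Rinv_l, Rmult_1_r in Hj1 by lra. lra. }
      assert (Hjn : (j <= n)%nat).
      { destruct (Nat.le_gt_cases j n) as [H|H]; auto. exfalso.
        assert (lam ^ n <= lam ^ j) by (apply Rle_pow; lia || lra).
        (* theta < a lam^n <= b lam^j < eta <= theta *)
        nra. }
      destruct (Hlev (S j) ltac:(lia)) as [_ [Hleb [_ Hnb]]].
      destruct (Hleb y0) as [U [HU HUb]].
      assert (HYU : forall y, In y Y -> U y).
      { intros y Hy. apply NNPP. intro HnU. specialize (HUb y HnU).
        rewrite rp in HUb by lra. simpl in HUb.
        replace (lam / (lam * lam ^ j) * eta) with (eta / lam ^ j) in HUb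
          by (field; lra).
        assert (d y0 y <= b).
        { destruct (classic (y0 = y)) as [<-|Hne].
          - rewrite (proj2 (Hdeq y0 y0) eq_refl). lra.
          - apply (Hsep y0 y); auto. rewrite EY; simpl; auto. }
        assert (eta <= d y0 y * lam ^ j).
        { apply (Rmult_le_compat_r (lam ^ j)) in HUb; [|lra]. unfold Rdiv in HUb.
          rewrite Rmult_assoc, Rinv_l, Rmult_1_r in HUb by lra. lra. }
        nra. }
      exists (n - j)%nat. split.
      + pose proof (level V CG (fun w => meets w U) Hpar
           (fun n Hn v Hv => proj1 (proj2 (proj2 (Hlev n Hn))) v Hv)) as L.
        assert (L2 : card_le (V (S j + (n - j))%nat) (fun w => meets w U) (NG * CG ^ (n - j))).
        { apply L; [|lia|].
          - intros w v Hwv [z [Hz1 Hz2]]. exists z; auto.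
          - apply Hnb; auto. }
        replace (S j + (n - j))%nat with (S n) in L2 by lia.
        apply Nat.le_trans with (NG * CG ^ (n - j))%nat; [|unfold K0; nia].
        apply (points_to_sets d (V (S n)) (fun w => meets w U) _ a (theta / lam ^ n) Y);
          auto.
        * apply Hcov.
        * intros y w Hy Hw. exists y. split; auto.
      + assert (E : lam ^ n = lam ^ (n - j) * lam ^ j)
          by (rewrite <- pow_add; f_equal; lia).
        assert (Hk : 0 < lam ^ (n - j)) by (apply pow_lt; lra).
        unfold D. apply (Rmult_le_reg_r (eta * a)); [nra|].
        replace (lam ^ 2 * theta / eta * (b / a) * (eta * a)) with (lam ^ 2 * theta * b)
          by (field; lra).
        (* eta * lam^k <= b lam lam^j lam^k = b lam lam^n *)
        assert (eta * lam ^ (n - j) <= b * lam * lam ^ n) by nra.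
        destruct Hn3 as [Hn3|Hn3].
        * assert (a <= lam * theta) by nra.
          assert (eta * lam ^ (n - j) <= b * lam) by nra.
          assert (lam ^ (n - j) * (eta * a) <= b * lam * a) by nra.
          assert (b * lam * a <= b * lam * (lam * theta)) by (apply Rmult_le_compat_l; nra).
          simpl. lra.
        * assert (eta * lam ^ (n - j) * a <= b * lam * (a * lam ^ n)) by nra.
          assert (b * lam * (a * lam ^ n) <= b * lam * (lam * theta)) by (apply Rmult_le_compat_l; nra).
          simpl. lra.
    - exists n. split.
      + pose proof (level V CG (fun _ => True) Hpar
           (fun n Hn v Hv => proj1 (proj2 (proj2 (Hlev n Hn))) v Hv)) as L.
        assert (L2 : card_le (V (1 + n)%nat) (fun _ => True) (length (V 1%nat) * CG ^ n)).
        { apply L; auto.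
          intros l Hl Hin. apply NoDup_incl_length; auto. intros x Hx; apply Hin; auto. }
        apply Nat.le_trans with (length (V 1%nat) * CG ^ n)%nat; [|unfold K0; nia].
        apply (points_to_sets d (V (S n)) (fun _ => True) _ a (theta / lam ^ n) Y); auto.
        apply Hcov.
      + unfold D. apply (Rmult_le_reg_r (eta * a)); [nra|].
        replace (lam ^ 2 * theta / eta * (b / a) * (eta * a)) with (lam ^ 2 * theta * b)
          by (field; lra).
        destruct Hn3 as [Hn3|Hn3].
        * assert (eta * a <= theta * b) by nra.
          assert (1 <= lam ^ 2) by (simpl; nra).
          assert (0 < eta * a) by nra.
          assert (lam ^ n * (eta * a) <= 1 * (eta * a)) by (apply Rmult_le_compat_r; lra).
          assert (theta * b <= lam ^ 2 * (theta * b)) by nra.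
          lra.
        * assert (eta <= lam * b) by nra.
          assert (lam ^ n * (eta * a) <= (a * lam ^ n) * eta) by lra.
          assert ((a * lam ^ n) * eta <= (lam * theta) * eta) by (apply Rmult_le_compat_r; lra).
          assert ((lam * theta) * eta <= (lam * theta) * (lam * b)) by (apply Rmult_le_compat_l; nra).
          simpl. lra. }
  destruct Hkey as [k [Hk1 Hk2]].
  assert (Hpow : (INR CG + 1) ^ k = Rpower (lam ^ k) s).
  { rewrite <- Rpower_pow by lra. unfold Rpower. f_equal.
    rewrite ln_pow by lra. unfold s. field. lra. }
  apply Rle_trans with (INR K0 * INR CG ^ k).
  { rewrite <- pow_INR, <- mult_INR. apply le_INR; auto. }
  rewrite Rmult_assoc. apply Rmult_le_compat_l; auto.
  apply Rle_trans with ((INR CG + 1) ^ k); [apply pow_incr; lra|].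
  rewrite Hpow, Rpower_mult_distr by lra.
  apply Rle_Rpower_l; auto. split; auto. apply pow_lt; lra.
Qed.
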